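(* Let $X=\{x_1,\dots,x_n\}$ be a finite $T_0$-space admitting a free action of a finite group $G$ by homeomorphisms. Then $\sum_{i=1}^{n}|U_{x_i}|$ and $\sum_{i=1}^{n}|F_{x_i}|$ are multiples of $|G|$.
   Context: For $x\in X$, $U_x$ is the intersection of all open sets containing $x$ and $F_x$ is the intersection of all closed sets containing $x$; equivalently, in the associated poset ($x\le y$ iff $U_x\subseteq U_y$), $U_x=\{y:y\le x\}$ and $F_x=\{y:y\ge x\}$. *)

(* Defs.v *)
From mathcomp Require Import all_boot all_fingroup.
Set Implicit Arguments. Unset Strict Implicit. Unset Printing Implicit Defensive.

Section FiniteTopology.
Variable T : finType.

(* [opn] is a topology on T. Since T is finite, closure under binary unions
   (together with set0) gives closure under arbitrary unions. *)
Definition is_topology (opn : {set {set T}}) : Prop :=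
  [/\ set0 \in opn, setT \in opn,
      (forall A B, A \in opn -> B \in opn -> A :|: B \in opn) &
      (forall A B, A \in opn -> B \in opn -> A :&: B \in opn)].

Definition is_T0 (opn : {set {set T}}) : Prop :=
  forall x y : T, x != y ->
    exists2 A, A \in opn & (x \in A) != (y \in A).

Definition Uset (opn : {set {set T}}) (x : T) : {set T} :=
  \bigcap_(A in opn | x \in A) A.

Definition Fset (opn : {set {set T}}) (x : T) : {set T} :=
  \bigcap_(C : {set T} | (~: C \in opn) && (x \in C)) C.

End FiniteTopology.

Definition acts_by_homeos (gT : finGroupType) (T : finType) (G : {group gT})
  (to : action G T) (opn : {set {set T}}) : Prop :=
  forall g, g \in G -> forall A : {set T},
    (A \in opn) = ([set to x g | x in A] \in opn).

Definition free_action (gT : finGroupType) (T : finType) (G : {group gT})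
  (to : action G T) : Prop :=
  forall g, g \in G -> forall x : T, to x g = x -> g = 1%g.

(* Main.v *)
Require Import Defs.
From mathcomp Require Import all_boot all_fingroup.

Section Aux.
Variables (gT : finGroupType) (G : {group gT}) (T : finType).
Variables (opn : {set {set T}}) (to : action G T).

Lemma memU (x y : T) :
  reflect (forall A, A \in opn -> x \in A -> y \in A) (y \in Uset opn x).
Proof.
apply: (iffP bigcapP) => H A.
  by move=> HA xA; apply: H; rewrite HA xA.
by case/andP; apply: H.
Qed.

Lemma memF (x y : T) :
  reflect (forall A, A \in opn -> y \in A -> x \in A) (y \in Fset opn x).
Proof.
apply: (iffP bigcapP) => H.
  move=> A HA yA; apply/negPn/negP => xA.
  have := H (~: A); rewrite setCK HA in_setC xA => /(_ isT).
  by rewrite in_setC yA.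
move=> C /andP[HC xC]; apply/negPn/negP => yC.
have := H _ HC; rewrite in_setC yC => /(_ isT).
by rewrite in_setC xC.
Qed.

Lemma Pinv g x y : acts_by_homeos to opn -> g \in G ->
  (forall A, A \in opn -> x \in A -> y \in A) ->
  forall A, A \in opn -> to x g \in A -> to y g \in A.
Proof.
move=> hom gG H A HA xA.
have gi : (g^-1)%g \in G by rewrite groupV.
have HB : [set to z (g^-1)%g | z in A] \in opn by rewrite -hom.
have : y \in [set to z (g^-1)%g | z in A].
  apply: H HB _; apply/imsetP; exists (to x g) => //.
  by rewrite actKin.
by case/imsetP => z zA ->; rewrite actKVin.
Qed.

Lemma free_dvd (f : T -> nat) : free_action to ->
  (forall g x, g \in G -> f (to x g) = f x) ->
  (#|G| %| \sum_(x : T) f x)%N.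
Proof.
move=> fr finv.
have acts : [acts G, on [set: T] | to].
  apply/subsetP => g gG; rewrite !inE gG /=.
  by apply/subsetP => x _; rewrite !inE.
have P := orbit_partition acts.
have -> : \sum_(x : T) f x = \sum_(x in [set: T]) f x.
  by apply: eq_bigl => x; rewrite inE.
rewrite -(cover_partition P).
rewrite big_trivIset; last by case/and3P: P.
apply: dvdn_sum => X /imsetP [x0 _ ->].
rewrite (eq_bigr (fun _ => f x0)); last first.
  by move=> x /orbitP [g gG <-]; apply: finv.
rewrite sum_nat_const.
have sGD : G \subset G := subxx _.
have Hst : #|('C_G[x0 | to])%g| = 1%N.
  apply/eqP; rewrite -trivg_card1 eqEsubset sub1G andbT.
  apply/subsetP => g; rewrite !inE.
  case/and3P => gG _ /subsetP /(_ x0 (set11 x0)); rewrite inE => /eqP.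
  by move/(fr g gG) ->.
have := card_orbit_in_stab to x0 sGD; rewrite Hst muln1 => ->.
by rewrite dvdn_mulr.
Qed.

End Aux.
Arguments Pinv {gT G T opn to g x y}.
Arguments memU {T opn}.
Arguments memF {T opn}.

Theorem mainTheorem19 (gT : finGroupType) (G : {group gT}) (T : finType)
  (opn : {set {set T}}) (to : action G T) :
  is_topology opn -> is_T0 opn ->
  acts_by_homeos to opn -> free_action to ->
  (#|G| %| \sum_(x : T) #|Uset opn x|)%N /\
  (#|G| %| \sum_(x : T) #|Fset opn x|)%N.
Proof.
move=> _ _ hom fr; split; apply: (@free_dvd _ _ _ to) => // g x gG.
  suff -> : Uset opn (to x g) = [set to y g | y in Uset opn x].
    by rewrite card_imset //; apply: act_inj.
  have gi : (g^-1)%g \in G by rewrite groupV.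
  apply/setP => y; apply/idP/imsetP.
    move/memU => H; exists (to y (g^-1)%g); last by rewrite actKVin.
    apply/memU => A HA xA; have := Pinv hom gi H A HA.
    by rewrite actKin //; apply.
  by case=> z /memU H ->; apply/memU; apply: Pinv.
suff -> : Fset opn (to x g) = [set to y g | y in Fset opn x].
  by rewrite card_imset //; apply: act_inj.
have gi : (g^-1)%g \in G by rewrite groupV.
apply/setP => y; apply/idP/imsetP.
  move/memF => H; exists (to y (g^-1)%g); last by rewrite actKVin.
  apply/memF => A HA yA.
  have := Pinv hom gi H A HA yA; by rewrite actKin.
by case=> z /memF H ->; apply/memF; apply: Pinv.
Qed.
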